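(* Let $q,m,k,s_1,\ldots,s_u$ be positive integers such that $q$ is a prime power and $m\leq q$. Assume that there exist a weighing matrix of order $m$ and weight $k$ and an orthogonal design of order $m$ and type $(s_1,\ldots,s_u)$. Then: (1) there exist $m$ mutually unbiased unit orthogonal designs of order $mq$ and type $(ks_1,\ldots,ks_u)$ with parameter $\alpha=k^2$; (2) for every nonempty subset $S\subseteq\{1,\ldots,u\}$ there exist $m$ mutually quasi-unbiased unit weighing matrices for the parameters $\left(mq,\;k\sum_{i\in S}s_i,\;k^2,\;(\sum_{i\in S}s_i)^2\right)$.
   Context: Let $\mathbb{T}=\{c\in\mathbb{C}:|c|=1\}$ and let $W^*$ denote the conjugate transpose. A weighing matrix of order $n$ and weight $k$ is an $n\times n$ $(0,1,-1)$-matrix $W$ with $WW^\top=kI_n$; an orthogonal design of order $n$ and type $(s_1,\ldots,s_u)$ in distinct commuting real indeterminates $x_1,\ldots,x_u$ is an $n\times n$ matrix $D$ with entries in $\{0,\pm x_1,\ldots,\pm x_u\}$ with $DD^\top=(s_1x_1^2+\cdots+s_ux_u^2)I_n$. A unit weighing matrix of order $n$ and weight $k$ is an $n\times n$ matrix $W$ with entries in $\{0\}\cup\mathbb{T}$ such that $WW^*=kI_n$. Two unit weighing matrices $W_1,W_2$ of order $n$ and weight $k$ are quasi-unbiased for parameters $(n,k,l,a)$ if $\frac1{\sqrt a}W_1W_2^*$ is a unit weighing matrix of order $n$ and weight $l$; a family is mutually quasi-unbiased if any two distinct members are. A unit orthogonal design of order $n$ and type $(s_1,\ldots,s_u)$ in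 variables $x_1,\ldots,x_u$ (distinct commuting real indeterminates) is an $n\times n$ matrix with entries in $\{0\}\cup\{\epsilon x_i: 1\le i\le u,\ \epsilon\in\mathbb{T}\}$ with $DD^*=(s_1x_1^2+\cdots+s_ux_u^2)I_n$. Two such designs $D_1,D_2$ (same order, type and variables) are unbiased with parameter $\alpha>0$ if there is an $n\times n$ matrix $W$ with entries in $\{0\}\cup\mathbb{T}$ such that $D_1D_2^*=\frac{s_1x_1^2+\cdots+s_ux_u^2}{\sqrt\alpha}W$; a family is mutually unbiased if any two distinct members are. *)

(* Defs.v *)
From mathcomp Require Import all_boot all_order all_algebra.
From mathcomp Require Import reals complex.
Set Implicit Arguments.
Unset Strict Implicit.
Unset Printing Implicit Defensive.
Import Order.TTheory GRing.Theory Num.Theory.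
Local Open Scope ring_scope.
Local Open Scope complex_scope.

Definition prime_power (q : nat) : Prop :=
  exists p e : nat, [/\ prime p, (0 < e)%N & q = (p ^ e)%N].

Definition weighing_matrix (n k : nat) (W : 'M[int]_n) : Prop :=
  (forall i j, W i j \in [:: 0; 1; -1]) /\ W *m W^T = (k%:Z)%:M.

(* A formal design in u indeterminates x_0..x_{u-1}: each entry is either 0
   (None) or (-1)^b x_l (Some (b, l)). *)
Definition rdesign (n u : nat) := 'M[option (bool * 'I_u)]_n.

Definition rdesign_eval (R : realType) n u (D : rdesign n u) (x : 'I_u -> R)
  : 'M[R]_n :=
  \matrix_(i, j) match D i j with
                 | None => 0
                 | Some (b, l) => (-1) ^+ b * x l
                 end.

(* orthogonal design of order n and type (s_0,...,s_{u-1}):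
   D D^T = (sum_l s_l x_l^2) I, as an identity in the (real, commuting)
   indeterminates; equivalently, for every real substitution. *)
Definition orthogonal_design (R : realType) n u (s : 'I_u -> nat)
  (D : rdesign n u) : Prop :=
  forall x : 'I_u -> R,
    rdesign_eval D x *m (rdesign_eval D x)^T
    = (\sum_(l < u) (s l)%:R * x l ^+ 2)%:M.

Definition ctrmx (R : realType) m n (A : 'M[R[i]]_(m, n)) : 'M[R[i]]_(n, m) :=
  (map_mx Num.conj A)^T.

Definition zero_or_unit (R : realType) (z : R[i]) : bool :=
  (z == 0) || (`|z| == 1).

Definition unit_weighing_matrix (R : realType) n (k : nat) (W : 'M[R[i]]_n)
  : Prop :=
  (forall i j, zero_or_unit (W i j)) /\ W *m ctrmx W = (k%:R)%:M.

Definition quasi_unbiased (R : realType) n (k l : nat) (a : R)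
  (W1 W2 : 'M[R[i]]_n) : Prop :=
  [/\ unit_weighing_matrix k W1, unit_weighing_matrix k W2 &
      unit_weighing_matrix l (((Num.sqrt a)^-1)%:C *: (W1 *m ctrmx W2))].

Definition mutually_quasi_unbiased (R : realType) n (k l : nat) (a : R)
  (I : finType) (W : I -> 'M[R[i]]_n) : Prop :=
  forall i j, i != j -> quasi_unbiased k l a (W i) (W j).

(* A formal unit design in u indeterminates: each entry is either 0 (None)
   or eps * x_l (Some (eps, l)) with eps in T. *)
Definition udesign (R : realType) (n u : nat) := 'M[option (R[i] * 'I_u)]_n.

Definition udesign_eval (R : realType) n u (D : udesign R n u)
  (x : 'I_u -> R) : 'M[R[i]]_n :=
  \matrix_(i, j) match D i j with
                 | None => 0
                 | Some (e, l) => e * (x l)%:C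
                 end.

Definition udesign_coeffs_unit (R : realType) n u (D : udesign R n u) : Prop :=
  forall i j e l, D i j = Some (e, l) -> `|e| = 1.

Definition unit_orthogonal_design (R : realType) n u (s : 'I_u -> nat)
  (D : udesign R n u) : Prop :=
  udesign_coeffs_unit D /\
  forall x : 'I_u -> R,
    udesign_eval D x *m ctrmx (udesign_eval D x)
    = ((\sum_(l < u) (s l)%:R * x l ^+ 2)%:C)%:M.

Definition unbiased_designs (R : realType) n u (s : 'I_u -> nat) (alpha : R)
  (D1 D2 : udesign R n u) : Prop :=
  [/\ unit_orthogonal_design s D1, unit_orthogonal_design s D2, 0 < alpha &
      exists W : 'M[R[i]]_n,
        (forall i j, zero_or_unit (W i j)) /\
        forall x : 'I_u -> R,
          udesign_eval D1 x *m ctrmx (udesign_eval D2 x)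
          = ((\sum_(l < u) (s l)%:R * x l ^+ 2) / Num.sqrt alpha)%:C *: W].

Definition mutually_unbiased_designs (R : realType) n u (s : 'I_u -> nat)
  (alpha : R) (I : finType) (D : I -> udesign R n u) : Prop :=
  forall i j, i != j -> unbiased_designs s alpha (D i) (D j).

(* Main.v *)
Require Import Defs.
From mathcomp Require Import all_boot all_order all_algebra.
From mathcomp Require Import finfield.
From mathcomp Require Import reals complex ring.
Set Implicit Arguments.
Unset Strict Implicit.
Unset Printing Implicit Defensive.
Import Order.TTheory GRing.Theory Num.Theory.
Local Open Scope ring_scope.
Local Open Scope complex_scope.

Section Index.
Variables (T : finType) (N : nat).
Hypothesis cT : #|T| = N.

Definition enc (z : T) : 'I_N := cast_ord cT (enum_rank z).
Definition dec (i : 'I_N) : T := enum_val (cast_ord (esym cT) i).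

Lemma encK : cancel enc dec.
Proof. by move=> z; rewrite /enc /dec cast_ordK enum_rankK. Qed.
Lemma decK : cancel dec enc.
Proof. by move=> i; rewrite /enc /dec enum_valK cast_ordKV. Qed.

Lemma sum_dec (V : nmodType) (f : T -> V) :
  \sum_(i < N) f (dec i) = \sum_z f z.
Proof.
rewrite (reindex enc) /=; last by exists dec => z _; rewrite ?encK ?decK.
by apply: eq_bigr => z _; rewrite encK.
Qed.

Lemma dec_eq i j : (dec i == dec j) = (i == j).
Proof. by apply/eqP/eqP => [H|->//]; rewrite -(decK i) H decK. Qed.

Variable K : comPzRingType.
Definition mkM (f : T -> T -> K) : 'M[K]_N := \matrix_(i, j) f (dec i) (dec j).

Lemma mkM_mul f g : mkM f *m mkM g = mkM (fun x y => \sum_z f x z * g z y).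
Proof.
apply/matrixP => i j; rewrite !mxE.
rewrite -(sum_dec (fun z => f (dec i) z * g z (dec j))).
by apply: eq_bigr => l _; rewrite !mxE.
Qed.

Lemma mkM_scalar (c : K) : mkM (fun x y => c * (x == y)%:R) = c%:M.
Proof. by apply/matrixP => i j; rewrite !mxE dec_eq mulr_natr. Qed.

Lemma mkM_inj f g : mkM f = mkM g -> forall x y, f x y = g x y.
Proof.
move=> /matrixP H x y; have := H (enc x) (enc y); by rewrite !mxE !encK.
Qed.
End Index.

Section Adj.
Variables (R : realType) (T : finType) (N : nat).
Hypothesis cT : #|T| = N.
Lemma ctrmx_mkM (f : T -> T -> R[i]) :
  ctrmx (mkM cT f) = mkM cT (fun x y => Num.conj (f y x)).
Proof. by apply/matrixP => i j; rewrite !mxE. Qed.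
End Adj.


Section Emb.
Variables (F : finFieldType) (m q : nat).
Hypotheses (hq : #|F| = q) (hmq : (m <= q)%N).

Definition sF : seq F := [seq x <- enum F | x != 0] ++ [:: 0].

Lemma sF_uniq : uniq sF.
Proof.
rewrite cat_uniq filter_uniq ?enum_uniq //= andbT.
by rewrite mem_filter eqxx.
Qed.

Lemma sF_mem x : x \in sF.
Proof. rewrite mem_cat mem_filter mem_enum inE andbT mem_seq1; exact: orNb. Qed.

Lemma size_sF : size sF = q.
Proof.
rewrite -hq cardE; apply: perm_size; apply: uniq_perm; rewrite ?sF_uniq ?enum_uniq //.
by move=> x; rewrite sF_mem mem_enum.
Qed.

Definition emb (c : 'I_m) : F := nth 0 sF c.

Lemma emb_inj : injective emb.
Proof.
move=> c c' /eqP; rewrite /emb nth_uniq ?sF_uniq ?size_sF //.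
- by move/eqP/val_inj.
- exact: leq_trans (ltn_ord c) hmq.
- exact: leq_trans (ltn_ord c') hmq.
Qed.

Lemma emb_surj j : emb j = 0 -> forall x, exists c, emb c = x.
Proof.
move=> Hj x; have [->|nx] := eqVneq x 0; first by exists j.
have jlt : (j < size sF)%N by rewrite size_sF (leq_trans (ltn_ord j) hmq).
have Ij : index 0 sF = j by rewrite -Hj /emb index_uniq ?sF_uniq.
have I0 : index 0 sF = size [seq x <- enum F | x != 0].
  by rewrite index_cat mem_filter eqxx /= eqxx addn0.
have xin : x \in [seq x <- enum F | x != 0] by rewrite mem_filter nx mem_enum.
have ix : (index x sF < j)%N.
  by rewrite -Ij I0 index_cat xin index_mem.
have ixm : (index x sF < m)%N by exact: ltn_trans ix (ltn_ord j).
exists (Ordinal ixm); by rewrite /emb /= nth_index ?sF_mem.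
Qed.

End Emb.


Section ZU.
Variable R : realType.
Local Notation C := R[i].

Lemma ZU0 : zero_or_unit (0 : C).
Proof. by rewrite /zero_or_unit eqxx. Qed.

Lemma ZU_nat (b : bool) : zero_or_unit (b%:R : C).
Proof. by case: b; rewrite /zero_or_unit ?eqxx // normr1 eqxx orbT. Qed.

Lemma ZU_mul (x y : C) : zero_or_unit x -> zero_or_unit y -> zero_or_unit (x * y).
Proof.
rewrite /zero_or_unit => /orP[/eqP->|/eqP nx]; first by rewrite mul0r eqxx.
move=> /orP[/eqP->|/eqP ny]; first by rewrite mulr0 eqxx.
by rewrite normrM nx ny mulr1 eqxx orbT.
Qed.

Lemma ZU_conj (x : C) : zero_or_unit x -> zero_or_unit (Num.conj x).
Proof. by rewrite /zero_or_unit norm_conjC conjC_eq0. Qed.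

Lemma ZU_int (z : int) : z \in [:: 0; 1; -1] -> zero_or_unit (z%:~R : C).
Proof.
rewrite !inE => /or3P[]/eqP->; rewrite /zero_or_unit ?eqxx //.
  by rewrite normr1 eqxx orbT.
by rewrite rmorphN /= normrN normr1 eqxx orbT.
Qed.

Lemma ZU_sum (T : finType) (f : T -> C) :
  (forall z, zero_or_unit (f z)) ->
  (forall z z', f z != 0 -> f z' != 0 -> z = z') ->
  zero_or_unit (\sum_z f z).
Proof.
move=> Hf Hu; case: (pickP (fun z => f z != 0)) => [z0 Hz0|H0].
  rewrite (bigD1 z0) //= big1 ?addr0 // => z nz.
  apply/eqP; apply: contraR nz => fz; apply/eqP; exact: Hu.
by rewrite big1 ?ZU0 // => z _; apply/eqP; have := H0 z => /= /negbFE.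
Qed.

Lemma sum_ind (T : finType) (g : T -> C) v :
  \sum_t (t == v)%:R * g t = g v.
Proof.
rewrite (bigD1 v) //= eqxx mul1r big1 ?addr0 // => t /negbTE ->.
by rewrite mul0r.
Qed.

Lemma sum_ind' (T : finType) (g : T -> C) v :
  \sum_t (v == t)%:R * g t = g v.
Proof. by rewrite -(sum_ind g v); apply: eq_bigr => t _; rewrite eq_sym. Qed.
End ZU.


Section Constr.
Variables (R : realType) (F : finFieldType) (m q k : nat).
Hypotheses (hq : #|F| = q) (hmq : (m <= q)%N) (hm : (0 < m)%N).
Variable W : 'M[int]_m.
Hypothesis HW : weighing_matrix k W.
Local Notation C := R[i].
Local Notation emb := (@emb F m).

Definition TT := ('I_m * F)%type.
Lemma cT : #|{: TT}| = (m * q)%N.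
Proof. by rewrite card_prod card_ord hq. Qed.

Definition c0 : 'I_m := Ordinal hm.
Definition psi (x : F) : 'I_m := odflt c0 [pick c | emb c == x].

Lemma embK c : psi (emb c) = c.
Proof.
rewrite /psi; case: pickP => [c' /eqP /(emb_inj hq hmq) //|/(_ c)]. 
by rewrite eqxx.
Qed.

Lemma psiK j : emb j = 0 -> forall x, emb (psi x) = x.
Proof.
move=> Hj x; have [c Hc] := emb_surj hq hmq Hj x.
by rewrite -Hc embK.
Qed.

Lemma psi_inj j : emb j = 0 -> injective psi.
Proof. by move=> Hj x y Hxy; rewrite -(psiK Hj x) Hxy (psiK Hj). Qed.

Definition Wc (a c : 'I_m) : C := (W a c)%:~R.

Lemma conj_Wc a c : Num.conj (Wc a c) = Wc a c.
Proof. by rewrite /Wc rmorph_int. Qed.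

Lemma ZU_Wc a c : zero_or_unit (Wc a c).
Proof. exact: ZU_int (HW.1 a c). Qed.

Lemma sumW a a' : \sum_c Wc a c * Wc a' c = k%:R * (a == a')%:R.
Proof.
have E : \sum_c Wc a c * Wc a' c = ((W *m W^T) a a')%:~R.
  by rewrite mxE mulrz_sumr; apply: eq_bigr => c _; rewrite mxE intrM.
rewrite E HW.2 mxE; case: eqP => _ /=; rewrite ?mulr1 ?mulr0 ?mulr0n //.
Qed.

Definition Gfin (l : F) (z w : TT) : C :=
  Wc z.1 w.1 * (w.2 == z.2 + l * emb w.1)%:R.
Definition Ginf (z w : TT) : C :=
  (z.1 == w.1)%:R * Wc (psi z.2) (psi w.2).
Definition G (j : 'I_m) : TT -> TT -> C :=
  if emb j == 0 then Ginf else Gfin (emb j).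

Lemma ZU_G j z w : zero_or_unit (G j z w).
Proof. by rewrite /G; case: ifP => _; apply: ZU_mul; rewrite ?ZU_nat ?ZU_Wc. Qed.

Lemma conj_G j z w : Num.conj (G j z w) = G j z w.
Proof. by rewrite /G /Gfin /Ginf; case: ifP => _; rewrite rmorphM /= conj_Wc rmorph_nat. Qed.

Lemma sumTT (f : TT -> C) : \sum_y f y = \sum_c \sum_t f (c, t).
Proof. by rewrite pair_big /=; apply: eq_bigr => -[]. Qed.

Lemma fiber j z c c' t : G j z (c, t) != 0 -> G j z (c', t) != 0 -> c = c'.
Proof.
rewrite /G /Gfin /Ginf; case: ifP => Hj /=.
  case: (z.1 =P c) => [<-|]; last by rewrite mul0r eqxx.
  by case: (z.1 =P c') => [<-//|]; rewrite mul0r eqxx.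
case: (t =P z.2 + emb j * emb c) => [->|]; last by rewrite mulr0 eqxx.
case: (z.2 + emb j * emb c =P z.2 + emb j * emb c') => [|]; last by rewrite mulr0 eqxx.
by move=> /addrI /(mulfI (negbT Hj)) /(emb_inj hq hmq).
Qed.

Lemma eq_pair_nat (z w : TT) :
  ((z == w)%:R : C) = (z.1 == w.1)%:R * (z.2 == w.2)%:R.
Proof.
case: z w => a r [b t] /=; rewrite xpair_eqE.
by case: (a == b); case: (r == t); rewrite ?mulr1 ?mulr0.
Qed.

Lemma GG_diag j z w : \sum_y G j z y * Num.conj (G j w y) = k%:R * (z == w)%:R.
Proof.
under eq_bigr do rewrite conj_G.
rewrite sumTT /G; case: ifP => Hj.
  have Hj0 : emb j = 0 by apply/eqP.
  rewrite /Ginf.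
  transitivity (\sum_c (z.1 == c)%:R * ((w.1 == c)%:R *
      \sum_t Wc (psi z.2) (psi t) * Wc (psi w.2) (psi t))).
    apply: eq_bigr => c _; rewrite !mulr_sumr; apply: eq_bigr => t _ /=; ring.
  rewrite sum_ind' (reindex emb) /=; last first.
    by exists psi => x _; [rewrite embK | rewrite (psiK Hj0)].
  under eq_bigr do rewrite !embK.
  rewrite sumW (inj_eq (psi_inj Hj0)) eq_pair_nat eq_sym; ring.
rewrite /Gfin.
transitivity (\sum_c Wc z.1 c * Wc w.1 c * (z.2 == w.2)%:R).
  apply: eq_bigr => c _ /=.
  transitivity (\sum_t (t == z.2 + emb j * emb c)%:R *
      (Wc z.1 c * (Wc w.1 c * (t == w.2 + emb j * emb c)%:R))).
    by apply: eq_bigr => t _; ring.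
  by rewrite sum_ind (inj_eq (addIr _)); ring.
by rewrite -mulr_suml sumW eq_pair_nat; ring.
Qed.

Lemma Gfin_nz l z c t : Gfin l z (c, t) != 0 -> t = z.2 + l * emb c.
Proof. by rewrite /Gfin /=; case: (t =P _) => [//|_]; rewrite mulr0 eqxx. Qed.

Lemma Ginf_nz z c t : Ginf z (c, t) != 0 -> c = z.1.
Proof. by rewrite /Ginf /=; case: (z.1 =P c) => [//|_]; rewrite mul0r eqxx. Qed.

Lemma GG_cross i j z w : i != j ->
  zero_or_unit (\sum_y G i z y * Num.conj (G j w y)).
Proof.
move=> nij; under eq_bigr do rewrite conj_G.
apply: ZU_sum => [y|[c t] [c' t']]; first by apply: ZU_mul; apply: ZU_G.
rewrite !mulf_eq0 !negb_or => /andP[h1 h2] /andP[h3 h4].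
move: h1 h2 h3 h4; rewrite /G; case: ifP => Hi; case: ifP => Hj.
- by move/eqP: Hi => Hi; move/eqP: Hj; rewrite -Hi => /(emb_inj hq hmq) E;
    move: nij; rewrite E eqxx.
- by move=> /Ginf_nz -> /Gfin_nz -> /Ginf_nz -> /Gfin_nz ->.
- by move=> /Gfin_nz -> /Ginf_nz -> /Gfin_nz -> /Ginf_nz ->.
move=> /Gfin_nz -> /Gfin_nz E1 /Gfin_nz -> /Gfin_nz E2.
have e1 : (emb i - emb j) * emb c = w.2 - z.2.
  transitivity ((z.2 + emb i * emb c) - z.2 - emb j * emb c); first by ring.
  by rewrite E1; ring.
have e2 : (emb i - emb j) * emb c' = w.2 - z.2.
  transitivity ((z.2 + emb i * emb c') - z.2 - emb j * emb c'); first by ring.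
  by rewrite E2; ring.
have nz : emb i - emb j != 0.
  by rewrite subr_eq0; apply: contra nij => /eqP /(emb_inj hq hmq) ->.
have : emb c = emb c' by apply: (mulfI nz); rewrite e1 e2.
by move=> /(emb_inj hq hmq) ->.
Qed.

Hypothesis hk : (0 < k)%N.

Lemma colW c : exists a, Wc a c != 0.
Proof.
pose Wm := map_mx (fun z : int => z%:~R : C) W.
have H1 : Wm *m Wm^T = (k%:R : C)%:M.
  apply/matrixP => a b; rewrite !mxE; under eq_bigr do rewrite !mxE.
  by have := sumW a b; rewrite /Wc => ->; rewrite mulr_natr.
have kn : (k%:R : C) != 0 by rewrite pnatr_eq0 -lt0n.
have H2 : (k%:R^-1 *: Wm) *m Wm^T = 1%:M.
  by rewrite -scalemxAl H1 scale_scalar_mx mulVf.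
have := mulmx1C H2 => /matrixP /(_ c c); rewrite !mxE eqxx /= => H3.
apply/existsP; rewrite -negb_forall; apply/negP => /forallP H4.
move: H3; rewrite big1 => [|a _]; first by move/eqP; rewrite eq_sym oner_eq0.
by rewrite !mxE; have /eqP := H4 a; rewrite /Wc => ->; rewrite mulr0 mul0r.
Qed.

Lemma G_ne_fin i j : i != j -> emb i != 0 -> emb j != 0 ->
  exists z w, G i z w != G j z w.
Proof.
move=> nij hi hj; have [a Ha] := colW i.
exists (a, 0), (i, emb i * emb i).
rewrite /G (negbTE hi) (negbTE hj) /Gfin /= !add0r eqxx mulr1.
have -> : (emb i * emb i == emb j * emb i) = false.
  by apply/eqP => /(mulIf hi) /(emb_inj hq hmq) E; move: nij; rewrite E eqxx.
by rewrite mulr0.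
Qed.

Lemma G_ne_inf i j : emb i = 0 -> emb j != 0 ->
  exists z w, G i z w != G j z w.
Proof.
move=> hi hj; have [a Ha] := colW j.
rewrite /G hi eqxx (negbTE hj).
have [eaj|naj] := eqVneq a j.
  exists (j, emb j), (j, emb j); rewrite /Ginf /Gfin /= eqxx embK mul1r.
  have -> : (emb j == emb j + emb j * emb j) = false.
    apply/eqP => E; move/(congr1 (fun v => v - emb j)): E.
    rewrite subrr addrAC subrr add0r => /esym /eqP; rewrite mulf_eq0 orbb.
    by rewrite (negbTE hj).
  by rewrite (_ : (false%:R : C) = 0) // mulr0; move: Ha; rewrite eaj.
exists (a, 0), (j, emb j * emb j); rewrite /Ginf /Gfin /= (negbTE naj) mul0r.
by rewrite add0r eqxx mulr1 eq_sym.
Qed.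

Lemma G_inj i j : (forall z w, G i z w = G j z w) -> i = j.
Proof.
move=> H; case: (eqVneq i j) => // nij; exfalso.
have [hi|hi] := eqVneq (emb i) 0; have [hj|hj] := eqVneq (emb j) 0.
- by move: nij; rewrite (emb_inj hq hmq (etrans hi (esym hj))) eqxx.
- by have [z [w]] := G_ne_inf hi hj; rewrite H eqxx.
- by have [z [w]] := G_ne_inf hj hi; rewrite H eqxx.
- by have [z [w]] := G_ne_fin nij hi hj; rewrite H eqxx.
Qed.

Variables (u : nat) (s : 'I_u -> nat) (Ad : rdesign m u).
Hypothesis HA : orthogonal_design R s Ad.

Definition Aev (x : 'I_u -> R) := rdesign_eval Ad x.
Definition sig (x : 'I_u -> R) : R := \sum_(l < u) (s l)%:R * x l ^+ 2.
Definition Ablk x (z w : TT) : C := (Aev x z.1 w.1)%:C * (z.2 == w.2)%:R.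

Lemma AA x z w :
  \sum_y Ablk x z y * Num.conj (Ablk x w y) = (sig x)%:C * (z == w)%:R.
Proof.
have cR (v : R) : Num.conj (v%:C) = v%:C := conjc_real v.
have cA y : Num.conj (Ablk x w y) = Ablk x w y.
  by rewrite /Ablk rmorphM /= cR rmorph_nat.
under eq_bigr do rewrite cA.
rewrite sumTT /Ablk.
transitivity (\sum_c ((Aev x z.1 c * Aev x w.1 c)%:C) * (w.2 == z.2)%:R).
  apply: eq_bigr => c _ /=.
  transitivity (\sum_t (z.2 == t)%:R * ((Aev x z.1 c)%:C * (Aev x w.1 c)%:C
       * (w.2 == t)%:R)).
    by apply: eq_bigr => t _; ring.
  by rewrite sum_ind' rmorphM.
rewrite -mulr_suml -rmorph_sum.
have := HA x => /matrixP /(_ z.1 w.1); rewrite !mxE => E.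
have -> : \sum_c Aev x z.1 c * Aev x w.1 c = sig x *+ (z.1 == w.1).
  by rewrite -E; apply: eq_bigr => c _; rewrite /Aev !mxE.
by rewrite rmorphMn eq_pair_nat -mulr_natr -mulrA (eq_sym w.2 z.2).
Qed.

Definition Dent j (z w : TT) : option (C * 'I_u) :=
  match [pick c | G j z (c, w.2) != 0] with
  | Some c => match Ad c w.1 with
              | Some (sg, l) => Some (G j z (c, w.2) * (-1) ^+ sg, l)
              | None => None end
  | None => None end.

Definition Dform j : udesign R (m * q) u :=
  \matrix_(e, f) Dent j (dec cT e) (dec cT f).

Definition MG j : 'M[C]_(m * q) := mkM cT (G j).
Definition MA x : 'M[C]_(m * q) := mkM cT (Ablk x).

Lemma Deval j x : udesign_eval (Dform j) x = MG j *m MA x.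
Proof.
rewrite /MG /MA mkM_mul; apply/matrixP => e f; rewrite !mxE.
set z := dec cT e; set w := dec cT f.
rewrite sumTT /Ablk.
transitivity (\sum_c G j z (c, w.2) * (Aev x c w.1)%:C); last first.
  apply: eq_bigr => c _ /=.
  transitivity (\sum_t (t == w.2)%:R * (G j z (c, t) * (Aev x c w.1)%:C)).
    by rewrite sum_ind.
  by apply: eq_bigr => t _; ring.
rewrite /Dent; case: pickP => [c Hc|H0]; last first.
  by rewrite big1 // => c _; have := H0 c => /= /negbFE /eqP ->; rewrite mul0r.
rewrite (bigD1 c) //= big1 ?addr0; last first.
  move=> c' nc; apply/eqP; rewrite mulf_eq0; apply/orP; left.
  by apply: contraR nc => H; apply/eqP; apply: (fiber H Hc).
rewrite /Aev /rdesign_eval mxE; case: (Ad c w.1) => [[sg l]|]; last first.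
  by rewrite rmorph0 mulr0.
by rewrite rmorphM rmorph_sign mulrA.
Qed.

Lemma Dcoef j : udesign_coeffs_unit (Dform j).
Proof.
move=> e f e0 l; rewrite mxE /Dent; case: pickP => [c Hc|] //.
case: (Ad c _) => [[sg l']|] //= [<- _].
have := ZU_G j (dec cT e) (c, (dec cT f).2); rewrite /zero_or_unit (negbTE Hc) /=.
by move/eqP; rewrite normrM => ->; rewrite normrX normrN1 expr1n mulr1.
Qed.

Lemma ctrmxM N (A B : 'M[C]_N) : ctrmx (A *m B) = ctrmx B *m ctrmx A.
Proof. by rewrite /ctrmx map_mxM trmx_mul. Qed.

Lemma MGG j : MG j *m ctrmx (MG j) = (k%:R : C)%:M.
Proof.
rewrite /MG ctrmx_mkM mkM_mul -(mkM_scalar cT); apply/matrixP => e f.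
by rewrite !mxE GG_diag.
Qed.

Lemma MGG_cross i j : i != j -> forall e f,
  zero_or_unit ((MG i *m ctrmx (MG j)) e f).
Proof.
move=> nij e f; rewrite /MG ctrmx_mkM mkM_mul mxE; exact: GG_cross.
Qed.

Lemma MAA x : MA x *m ctrmx (MA x) = (sig x)%:C%:M.
Proof.
rewrite /MA ctrmx_mkM mkM_mul -(mkM_scalar cT); apply/matrixP => e f.
by rewrite !mxE AA.
Qed.

Lemma Dprod i j x : udesign_eval (Dform i) x *m ctrmx (udesign_eval (Dform j) x)
  = (sig x)%:C *: (MG i *m ctrmx (MG j)).
Proof.
rewrite !Deval ctrmxM !mulmxA -(mulmxA (MG i)) MAA mul_mx_scalar.
by rewrite -scalemxAl.
Qed.

Lemma MG_inj : injective MG.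
Proof. by move=> i j /mkM_inj H; apply: G_inj. Qed.

Hypotheses (hu : (0 < u)%N) (hs : forall l, (0 < s l)%N).

Lemma ctrmxK N (A : 'M[C]_N) : ctrmx (ctrmx A) = A.
Proof. by apply/matrixP => i j; rewrite !mxE conjCK. Qed.

Lemma MGG' j : ctrmx (MG j) *m MG j = (k%:R : C)%:M.
Proof.
have kn : (k%:R : C) != 0 by rewrite pnatr_eq0 -lt0n.
have H : (k%:R^-1 *: MG j) *m ctrmx (MG j) = 1%:M.
  by rewrite -scalemxAl MGG scale_scalar_mx mulVf.
have := mulmx1C H; rewrite -scalemxAr => /(congr1 (fun M => (k%:R : C) *: M)).
by rewrite scalerA mulfV // scale1r => ->; rewrite scale_scalar_mx mulr1.
Qed.

Lemma MG_eq_of x i j : sig x != 0 -> MG i *m MA x = MG j *m MA x -> i = j.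
Proof.
move=> hx E; apply: MG_inj.
have := congr1 (mulmx^~ (ctrmx (MA x))) E; rewrite /= -!mulmxA MAA.
rewrite !mul_mx_scalar; apply: scalerI.
by rewrite (_ : 0 = 0%:C) // (inj_eq (@complexI _)).
Qed.

Lemma sig_pos_nat (S : {set 'I_u}) : S != set0 -> (0 < \sum_(l in S) s l)%N.
Proof.
case/set0Pn => l lS; rewrite (bigD1 l) //=.
by apply: leq_trans (hs l) (leq_addr _ _).
Qed.

Lemma sig_ind (S : {set 'I_u}) :
  sig (fun l => (l \in S)%:R) = (\sum_(l in S) s l)%:R.
Proof.
rewrite /sig natr_sum [RHS]big_mkcond; apply: eq_bigr => l _ /=.
by case: (l \in S); rewrite /= ?expr1n ?mulr1 // expr0n mulr0.
Qed.

Lemma main_lemma :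
  (exists D : 'I_m -> udesign R (m * q) u,
      injective D /\
      mutually_unbiased_designs (fun l => k * s l)%N ((k ^ 2)%:R : R) D)
  /\
  (forall S : {set 'I_u}, S != set0 ->
     exists W : 'I_m -> 'M[R[i]]_(m * q),
       injective W /\
       mutually_quasi_unbiased (k * \sum_(l in S) s l)%N (k ^ 2)%N
         (((\sum_(l in S) s l) ^ 2)%:R : R) W).
Proof.
have kn : (k%:R : R) != 0 by rewrite pnatr_eq0 -lt0n.
have sqk : Num.sqrt ((k ^ 2)%:R : R) = k%:R.
  by rewrite natrX sqrtr_sqr ger0_norm ?ler0n.
have Hsum x : \sum_(l < u) ((k * s l)%N%:R * x l ^+ 2) = k%:R * sig x.
  by rewrite /sig mulr_sumr; apply: eq_bigr => l _; rewrite natrM mulrA.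
have UOD j : unit_orthogonal_design (fun l => k * s l)%N (Dform j).
  split; first exact: Dcoef.
  move=> x; rewrite Dprod MGG scale_scalar_mx Hsum.
  by congr (_%:M); rewrite rmorphM rmorph_nat mulrC.
split.
  exists Dform; split.
    move=> i j E; apply: (@MG_eq_of (fun l => (l \in [set: 'I_u])%:R)).
      rewrite sig_ind pnatr_eq0 -lt0n sig_pos_nat //.
      by apply/set0Pn; exists (Ordinal hu); rewrite inE.
    by rewrite -!Deval E.
  move=> i j nij; split; [exact: UOD | exact: UOD | | ].
    by rewrite ltr0n expn_gt0 hk.
  exists (MG i *m ctrmx (MG j)); split; first exact: MGG_cross.
  by move=> x; rewrite Dprod Hsum sqk mulrC mulrA mulVf ?mul1r.
move=> S nS.
pose xS := fun l : 'I_u => ((l \in S)%:R : R).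
have tS : (0 < \sum_(l in S) s l)%N := sig_pos_nat nS.
set t := \sum_(l in S) s l in tS *.
have tn : (t%:R : R) != 0 by rewrite pnatr_eq0 -lt0n.
have sigS : sig xS = t%:R by rewrite /xS sig_ind.
have ZUe j e f : zero_or_unit (udesign_eval (Dform j) xS e f).
  rewrite mxE; case E: (Dform j e f) => [[e0 l]|]; last exact: ZU0.
  apply: ZU_mul.
    by rewrite /zero_or_unit (Dcoef E) eqxx orbT.
  by rewrite /xS rmorph_nat; apply: ZU_nat.
have UW j : unit_weighing_matrix (k * t) (udesign_eval (Dform j) xS).
  split; first exact: ZUe.
  rewrite Dprod MGG scale_scalar_mx sigS rmorph_nat.
  by congr (_%:M); rewrite natrM mulrC.
exists (fun j => udesign_eval (Dform j) xS); split.
  move=> i j E; apply: (@MG_eq_of xS); first by rewrite sigS.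
  by rewrite -!Deval.
move=> i j nij; split; [exact: UW | exact: UW |].
rewrite Dprod sigS natrX sqrtr_sqr ger0_norm ?ler0n //.
rewrite scalerA -rmorphM /= mulVf // scale1r.
split; first exact: MGG_cross.
rewrite ctrmxM ctrmxK !mulmxA -(mulmxA (MG i)) MGG' mul_mx_scalar -scalemxAl MGG.
by rewrite scale_scalar_mx natrX expr2.
Qed.

End Constr.


Theorem theorem6p2 (R : realType) (q m k u : nat) (s : 'I_u -> nat) :
  (0 < q)%N -> (0 < m)%N -> (0 < k)%N -> (0 < u)%N ->
  (forall l, (0 < s l)%N) ->
  prime_power q -> (m <= q)%N ->
  (exists W : 'M[int]_m, weighing_matrix k W) ->
  (exists D : rdesign m u, orthogonal_design R s D) ->
  (* (1) *)
  (exists D : 'I_m -> udesign R (m * q) u,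
      injective D /\
      mutually_unbiased_designs (fun l => k * s l)%N ((k ^ 2)%:R : R) D)
  /\
  (* (2) *)
  (forall S : {set 'I_u}, S != set0 ->
     exists W : 'I_m -> 'M[R[i]]_(m * q),
       injective W /\
       mutually_quasi_unbiased (k * \sum_(l in S) s l)%N (k ^ 2)%N
         (((\sum_(l in S) s l) ^ 2)%:R : R) W).
Proof.
move=> hq0 hm hk hu hs [p [e [pp he Hq]]] hmq [W HW] [Ad HA].
have [F _ hF] := pPrimePowerField pp he.
have hq : #|F| = q by rewrite hF Hq.
exact: (@main_lemma R F m q k hq hmq hm W HW hk u s Ad HA hu hs).
Qed.
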